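(* Let $\mathcal{T}$ be an MPQ-tree of an interval graph $G=(V,E)$ and let $x\neq y$ be vertices with $node(x)=node(y)=P$, where $P$ is a P-node that is not a leaf of $\mathcal{T}$. Then $(x,y)$ is not an interval edge, i.e. $G-(x,y)$ is not an interval graph.
   Context: Graphs are finite and simple; for $G=(V,E)$ and $e\in E$, $G-e=(V,E\setminus\{e\})$. An edge $(x,y)\in E$ of an interval graph $G$ is an interval edge if $G-(x,y)$ is an interval graph. An MPQ-tree of an interval graph $G=(V,E)$, $V=\{1,\dots,n\}$, is a rooted plane tree whose nodes are P-nodes and Q-nodes. Each P-node carries a (possibly empty) set of vertices. A Q-node has $k\ge 3$ ordered positions $1,\dots,k$; position $i$ carries a set $S_i\subseteq V$ (the $i$-th section) and a child subtree $T_i$, which may be empty. Every vertex $v$ is assigned to exactly one node $node(v)$: either $v$ lies in the set of the P-node $node(v)$, or $node(v)$ is a Q-node and $v$ lies exactly in the sections $S_{l(v)},S_{l(v)+1},\dots,S_{r(v)}$ of it, with $l(v)<r(v)$. For a node with child subtrees $T_1,\dots,T_k$, $V_i$ denotes the set of vertices assigned to nodes of $T_i$ ($V_i=\emptyset$ if $T_i$ is empty). The maximal cliques of $G$ are in bijection with the descending paths from the root which at a P-node continue into one of its children (stopping if there is none) and at a Q-node choose a position $i$ and continue into $T_i$ (stopping if $T_i$ is empty); the clique is the union of the sets of the visited P-nodes and the chosen sections. Reading these cliques left to right gives a linear order of the maximal cliques, and the orders obtained this way after arbitrarily permuting children of P-nodes and reversing the positions of Q-nodes are exactly the orders of the maximal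 cliques of $G$ in which the cliques containing any fixed vertex are consecutive. Moreover, for every Q-node with sections $S_1,\dots,S_k$: (a) $V_1\neq\emptyset$ and $V_k\ne\emptyset$; (b) $S_1\subseteq S_2$ and $S_k\subseteq S_{k-1}$; (c) $S_{i-1}\cap S_i\neq\emptyset$ for $2\le i\le k$; (d) $S_{i-1}\neq S_i$ for $2\le i\le k$; (e) $(S_i\cap S_{i+1})\setminus S_1\neq\emptyset$ and $(S_{i-1}\cap S_i)\setminus S_k\neq\emptyset$ for $2\le i\le k-1$; (f) $(S_{i-1}\cup V_{i-1})\setminus S_i\neq\emptyset$ and $(S_i\cup V_i)\setminus S_{i-1}\neq\emptyset$ for $2\le i\le k$; and further (g) no empty P-node has an empty P-node as its parent, (h) no P-node has exactly one child whose root is a P-node, (i) every child subtree of a P-node is nonempty. *)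

(* Defs.v *)
From HB Require Import structures.
From Stdlib Require List Permutation.
From mathcomp Require Import all_boot.
Set Implicit Arguments. Unset Strict Implicit. Unset Printing Implicit Defensive.

Section MPQ.
Variable T : finType.

(* A simple graph on the finite vertex type T is a symmetric irreflexive
   relation e : rel T (the edge set). *)

Definition remove_edge (e : rel T) (x y : T) : rel T :=
  [rel u v | e u v && ~~ (((u == x) && (v == y)) || ((u == y) && (v == x)))].

(* interval graph: intersection graph of closed intervals [l v, r v];
   integer (nat) endpoints, which for finite graphs is equivalent to
   real endpoints. *)
Definition is_interval_graph (e : rel T) : Prop :=
  exists l r : T -> nat, (forall v, l v <= r v) /\
    forall u v, u != v -> (e u v <-> maxn (l u) (l v) <= minn (r u) (r v)).

Definition is_clique (e : rel T) (A : {set T}) : Prop :=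
  {in A &, forall u v, u != v -> e u v}.

Definition is_maxclique (e : rel T) (A : {set T}) : Prop :=
  is_clique e A /\ forall B, is_clique e B -> A \subset B -> B = A.

(* A P-node carries a set and a list of (nonempty) child subtrees;
   a Q-node carries the list of its positions: (section S_i, child T_i),
   where T_i = None means the empty subtree. *)
Inductive mpq : Type :=
| PNode of {set T} & seq mpq
| QNode of seq ({set T} * option mpq).

Fixpoint subtrees (t : mpq) : seq mpq :=
  t :: match t with
       | PNode _ cs => flatten (map subtrees cs)
       | QNode ss => flatten (map (fun p => match p with
                                            | (_, Some c) => subtrees c
                                            | (_, None) => [::] end) ss)
       end.

Definition sets_of (u : mpq) : seq {set T} :=
  match u with PNode A _ => [:: A] | QNode ss => map fst ss end.

Definition verts (t : mpq) : {set T} :=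
  \bigcup_(u <- subtrees t) \bigcup_(A <- sets_of u) A.

Definition overts (o : option mpq) : {set T} :=
  if o is Some c then verts c else set0.

(* maximal cliques read off the descending paths, left to right *)
Fixpoint cliques (t : mpq) : seq {set T} :=
  match t with
  | PNode A cs =>
      if cs is [::] then [:: A]
      else flatten (map (fun c => map (setU A) (cliques c)) cs)
  | QNode ss =>
      flatten (map (fun p => match p with
                             | (Si, None) => [:: Si]
                             | (Si, Some c) => map (setU Si) (cliques c) end) ss)
  end.

Inductive reorder : mpq -> mpq -> Prop :=
| reorderP S cs ds es : reorder_list cs ds -> Permutation.Permutation ds es ->
    reorder (PNode S cs) (PNode S es)
| reorderQ ss ss' : reorder_secs ss ss' -> reorder (QNode ss) (QNode ss')
| reorderQrev ss ss' : reorder_secs ss ss' -> reorder (QNode ss) (QNode (rev ss'))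
with reorder_list : seq mpq -> seq mpq -> Prop :=
| rl_nil : reorder_list [::] [::]
| rl_cons c d cs ds : reorder c d -> reorder_list cs ds ->
    reorder_list (c :: cs) (d :: ds)
with reorder_secs : seq ({set T} * option mpq) -> seq ({set T} * option mpq) -> Prop :=
| rs_nil : reorder_secs [::] [::]
| rs_none S ss ss' : reorder_secs ss ss' ->
    reorder_secs ((S, None) :: ss) ((S, None) :: ss')
| rs_some S c d ss ss' : reorder c d -> reorder_secs ss ss' ->
    reorder_secs ((S, Some c) :: ss) ((S, Some d) :: ss').

Definition consecutive (p : pred {set T}) (s : seq {set T}) : Prop :=
  forall i j k, i <= j -> j <= k -> k < size s ->
    p (nth set0 s i) -> p (nth set0 s k) -> p (nth set0 s j).

Definition consecutive_clique_order (e : rel T) (s : seq {set T}) : Prop :=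
  uniq s /\ (forall A, A \in s <-> is_maxclique e A) /\
  forall v, consecutive (fun A => v \in A) s.

(* local conditions at a Q-node with positions ss (0-based indices) *)
Definition Qnode_ok (ss : seq ({set T} * option mpq)) : Prop :=
  let k := size ss in
  let S i := nth set0 (map fst ss) i in
  let V i := overts (nth None (map snd ss) i) in
  [/\ 3 <= k,
      V 0 != set0 /\ V k.-1 != set0,
      S 0 \subset S 1 /\ S k.-1 \subset S k.-2,
      (forall i, 1 <= i < k -> S i.-1 :&: S i != set0) /\
      (forall i, 1 <= i < k -> S i.-1 != S i) /\
      (forall i, 1 <= i < k.-1 ->
                   (S i :&: S i.+1) :\: S 0 != set0 /\
                   (S i.-1 :&: S i) :\: S k.-1 != set0)
    & (forall i, 1 <= i < k ->
                   (S i.-1 :|: V i.-1) :\: S i != set0 /\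
                   (S i :|: V i) :\: S i.-1 != set0)].

Definition Qnode_vertex_ok (ss : seq ({set T} * option mpq)) (v : T) : Prop :=
  let S i := nth set0 (map fst ss) i in
  (exists i, i < size ss /\ v \in S i) ->
  exists l r, [/\ l < r, r < size ss &
                  forall i, i < size ss -> (v \in S i <-> l <= i <= r)].

Definition is_MPQ_tree (e : rel T) (t : mpq) : Prop :=
  [/\
      (forall v : T, count (fun u => has (fun A : {set T} => v \in A) (sets_of u)) (subtrees t) = 1) /\
      (forall ss v, List.In (QNode ss) (subtrees t) -> Qnode_vertex_ok ss v),
      uniq (cliques t) /\ (forall A, A \in cliques t <-> is_maxclique e A),
      (forall s, (exists t', reorder t t' /\ cliques t' = s) <->
                 consecutive_clique_order e s),
      (forall ss, List.In (QNode ss) (subtrees t) -> Qnode_ok ss) /\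
      (forall S cs S' cs', List.In (PNode S cs) (subtrees t) -> S = set0 ->
         List.In (PNode S' cs') cs -> S' != set0)
    &
      (forall S cs S' cs', List.In (PNode S cs) (subtrees t) ->
         cs <> [:: PNode S' cs'])].
(* (i) every child subtree of a P-node is nonempty: built into the type mpq *)

End MPQ.

(* Main.v *)
Require Import Defs.
From HB Require Import structures.
From mathcomp Require Import all_boot zify.
From Stdlib Require List.
Set Implicit Arguments. Unset Strict Implicit.


Section G.
Variable T : finType.
Implicit Types (e : rel T).

Lemma rem_edge e x y u v : e u v -> (u != x) || (v != y) -> (u != y) || (v != x) ->
  remove_edge e x y u v.
Proof.
move=> euv h1 h2; rewrite /remove_edge /= euv /= negb_or !negb_and.
by rewrite h1 h2.
Qed.

Lemma core e (C1 C2 : {set T}) x y :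
  symmetric e -> irreflexive e ->
  is_maxclique e C1 -> is_maxclique e C2 -> C1 != C2 ->
  x \in C1 -> y \in C1 -> x \in C2 -> y \in C2 -> x != y ->
  ~ is_interval_graph (remove_edge e x y).
Proof.
move=> sym irr [cl1 mx1] [cl2 mx2] neq x1 y1 x2 y2 nxy.
have [a a1 a2] : exists2 a, a \in C1 & a \notin C2.
  case: (boolP (C1 \subset C2)) => [sub|/subsetPn [a ? ?]]; last by exists a.
  by move: neq; rewrite (mx1 _ cl2 sub) eqxx.
have [c c2 nac] : exists2 c, c \in C2 & ~~ e a c.
  case: (boolP [exists c in C2, ~~ e a c]) => [/exists_inP [c ? ?]|/exists_inPn H]; first by exists c.
  have clq : is_clique e (a |: C2).
    move=> u v; rewrite !in_setU1 => /orP [/eqP->|u2] /orP [/eqP->|v2] uv.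
    - by rewrite eqxx in uv.
    - by move: (H v v2); rewrite negbK.
    - by rewrite sym; move: (H u u2); rewrite negbK.
    - exact: cl2.
  have := mx2 _ clq (subsetUr _ _) => E.
  by move: a2; rewrite -E in_setU1 eqxx.
have c1 : c \notin C1.
  apply/negP => c1; have ac : a != c by apply: contraNneq a2 => ->.
  by move: nac; rewrite cl1.
have ax : a != x by apply: contraNneq a2 => ->.
have ay : a != y by apply: contraNneq a2 => ->.
have cx : c != x by apply: contraNneq c1 => ->.
have cy : c != y by apply: contraNneq c1 => ->.
have ax' : x != a by rewrite eq_sym.
have ay' : y != a by rewrite eq_sym.
have cx' : x != c by rewrite eq_sym.
have cy' : y != c by rewrite eq_sym.
have ac : a != c by apply: contraNneq a2 => ->.
have exa : e x a by apply: cl1; rewrite // eq_sym.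
have eya : e y a by apply: cl1; rewrite // eq_sym.
have exc : e x c by apply: cl2; rewrite // eq_sym.
have eyc : e y c by apply: cl2; rewrite // eq_sym.
move=> [l [r [lr H]]].
have P1 := proj1 (H x a ax') (ltac:(apply: rem_edge; rewrite ?eqxx ?ax ?ay ?cx ?cy ?ax' ?ay' ?cx' ?cy' ?exa ?eya ?exc ?eyc ?orbT //)).
have P2 := proj1 (H y a ay') (ltac:(apply: rem_edge; rewrite ?eqxx ?ax ?ay ?cx ?cy ?ax' ?ay' ?cx' ?cy' ?exa ?eya ?exc ?eyc ?orbT //)).
have P3 := proj1 (H x c cx') (ltac:(apply: rem_edge; rewrite ?eqxx ?ax ?ay ?cx ?cy ?ax' ?ay' ?cx' ?cy' ?exa ?eya ?exc ?eyc ?orbT //)).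
have P4 := proj1 (H y c cy') (ltac:(apply: rem_edge; rewrite ?eqxx ?ax ?ay ?cx ?cy ?ax' ?ay' ?cx' ?cy' ?exa ?eya ?exc ?eyc ?orbT //)).
have P5 : ~ (maxn (l x) (l y) <= minn (r x) (r y)).
  by move=> /(proj2 (H x y nxy)); rewrite /remove_edge /= !eqxx /= andbF.
have P6 : ~ (maxn (l a) (l c) <= minn (r a) (r c)).
  by move=> /(proj2 (H a c ac)); rewrite /remove_edge /= (negbTE nac).
move: P1 P2 P3 P4 P5 P6; rewrite !geq_max !leq_min.
move=> /and3P[/andP[h1 h2] h3 h4] /and3P[/andP[h5 h6] h7 h8] /and3P[/andP[h9 h10] h11 h12] /and3P[/andP[h13 h14] h15 h16] P5 P6.
have := lr x; have := lr y; have := lr a; have := lr c.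
clear -h1 h2 h3 h4 h5 h6 h7 h8 h9 h10 h11 h12 h13 h14 h15 h16 P5 P6.
move: P5 P6 => /negP P5 /negP P6. rewrite !negb_and in P5 P6. lia.
Qed.
End G.


Section Tr.
Variable T : finType.

Section Ind.
Variable P : mpq T -> Prop.
Hypothesis HP : forall A cs, (forall c, List.In c cs -> P c) -> P (PNode A cs).
Hypothesis HQ : forall ss, (forall S c, List.In (S, Some c) ss -> P c) -> P (QNode ss).
Fixpoint mpq_ind' (t : mpq T) : P t :=
  match t with
  | PNode A cs => @HP A cs
      ((fix F (l : seq (mpq T)) : forall c, List.In c l -> P c :=
          match l with
          | [::] => fun c H => False_ind _ H
          | c' :: l' => fun c H =>
              match H with
              | or_introl E => eq_ind c' P (mpq_ind' c') c E
              | or_intror H' => F l' c H'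
              end
          end) cs)
  | QNode ss => @HQ ss
      ((fix F (l : seq ({set T} * option (mpq T))) : forall S c, List.In (S, Some c) l -> P c :=
          match l with
          | [::] => fun S c H => False_ind _ H
          | (S', Some c') :: l' => fun S c H =>
              match H with
              | or_introl E => eq_ind c' P (mpq_ind' c') c
                   (f_equal (fun p : {set T} * option (mpq T) => match p.2 with Some d => d | None => c' end) E)
              | or_intror H' => F l' S c H'
              end
          | (S', None) :: l' => fun S c H =>
              match H with
              | or_introl E => False_ind _ (eq_ind (S', None) (fun p : {set T} * option (mpq T) => if p.2 is None then True else False) I _ E)
              | or_intror H' => F l' S c H'
              end
          end) ss)
  end.
End Ind.

Lemma In_flatten (A : Type) (x : A) ss :
  List.In x (flatten ss) <-> exists s, List.In s ss /\ List.In x s.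
Proof.
elim: ss => [|s ss IH] /=; first by split=> // [[s []]].
rewrite List.in_app_iff IH; split.
- case=> [h|[s' [h1 h2]]]; [by exists s; auto | by exists s'; auto].
- by case=> s' [[<-|h1] h2]; [left | right; exists s'].
Qed.

Lemma size_flatten_ge (A : Type) (l : seq (seq A)) :
  (forall s, List.In s l -> 0 < size s) -> size l <= size (flatten l).
Proof.
elim: l => [|s l IH] //= H; rewrite size_cat.
have := H s (or_introl erefl); have := IH (fun s' h => H s' (or_intror h)). lia.
Qed.

Definition Qsz (t : mpq T) := forall ss, List.In (@QNode T ss) (subtrees t) -> 0 < size ss.

Lemma sub_child (A : {set T}) (cs : seq (mpq T)) c u : List.In c cs -> List.In u (subtrees c) ->
  List.In u (subtrees (PNode A cs)).
Proof.
move=> hc hu /=; right; apply/In_flatten; exists (subtrees c); split => //.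
exact: List.in_map.
Qed.

Lemma sub_childQ (ss : seq ({set T} * option (mpq T))) (S0 : {set T}) c u : List.In (S0, Some c) ss -> List.In u (subtrees c) ->
  List.In u (subtrees (QNode ss)).
Proof.
move=> hc hu /=; right; apply/In_flatten; exists (subtrees c); split => //.
exact: (List.in_map (fun p : {set T} * option (mpq T) => match p with
                                            | (_, Some c) => subtrees c
                                            | (_, None) => [::] end) _ _ hc).
Qed.

Lemma cliques_ne (t : mpq T) : Qsz t -> 0 < size (cliques t).
Proof.
elim/mpq_ind': t => [A cs IH|ss IH] Hq /=.
- case: cs IH Hq => [|c cs] // IH Hq.
  rewrite /= size_cat size_map.
  have := IH c (or_introl erefl) (fun ss h => Hq ss (@sub_child A (c :: cs) c _ (or_introl erefl) h)).
  lia.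
- have h0 := Hq ss (or_introl erefl).
  apply: leq_trans h0 _.
  rewrite -(size_map (fun p : {set T} * option (mpq T) => match p with
                             | (Si, None) => [:: Si]
                             | (Si, Some c) => map (setU Si) (cliques c) end) ss).
  apply: size_flatten_ge => s /List.in_map_iff [[Si [c|]] [<- hp]] //.
  rewrite size_map; apply: (IH Si) => // ss' h.
  exact: Hq ss' (sub_childQ hp h).
Qed.

Lemma cliques_Q_size (ss : seq ({set T} * option (mpq T))) : Qsz (QNode ss) -> size ss <= size (cliques (QNode ss)).
Proof.
move=> Hq /=.
rewrite -(size_map (fun p : {set T} * option (mpq T) => match p with
                             | (Si, None) => [:: Si]
                             | (Si, Some c) => map (setU Si) (cliques c) end) ss).
apply: size_flatten_ge => s /List.in_map_iff [[Si [c|]] [<- hp]] //.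
rewrite size_map; apply: cliques_ne => ss' h.
exact: Hq ss' (sub_childQ hp h).
Qed.

Lemma cliquesP (A : {set T}) (cs : seq (mpq T)) : cs <> [::] ->
  cliques (PNode A cs) = flatten (map (fun c => map (setU A) (cliques c)) cs).
Proof. by case: cs. Qed.

Lemma subtree_cliques (t u : mpq T) : List.In u (subtrees t) ->
  exists Z pre post, cliques t = pre ++ map (setU Z) (cliques u) ++ post.
Proof.
elim/mpq_ind': t => [A cs IH|ss IH].
- case=> [<-|/In_flatten [s [/List.in_map_iff [c [<- hc]] hu]]].
    by exists set0, [::], [::]; rewrite cats0 /= (eq_map (@set0U _)) map_id.
  have [Z [pre [post E]]] := IH c hc hu.
  have [l1 [l2 E2]] := List.in_split _ _ hc.
  have ne : cs <> [::] by rewrite E2; case: l1 {E2}.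
  rewrite (cliquesP A ne) E2 map_cat flatten_cat /= E !map_cat -map_comp.
  exists (A :|: Z), (flatten (map (fun c => map (setU A) (cliques c)) l1) ++ map (setU A) pre),
    (map (setU A) post ++ flatten (map (fun c => map (setU A) (cliques c)) l2)).
  rewrite -!catA; congr (_ ++ (_ ++ _)).
  by rewrite (eq_map (g := setU (A :|: Z))) // => C /=; rewrite setUA.
- case=> [<-|/In_flatten [s [/List.in_map_iff [[Si [c|]] [<- hc]] hu]]] //.
    by exists set0, [::], [::]; rewrite cats0 /= (eq_map (@set0U _)) map_id.
  have [Z [pre [post E]]] := IH Si c hc hu.
  have [l1 [l2 E2]] := List.in_split _ _ hc.
  pose F := (fun p : {set T} * option (mpq T) => match p with
                             | (Si, None) => [:: Si]
                             | (Si, Some c) => map (setU Si) (cliques c) end).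
  change (cliques (QNode ss)) with (flatten (map F ss)).
  rewrite E2 map_cat flatten_cat /= E !map_cat -map_comp.
  exists (Si :|: Z), (flatten (map F l1) ++ map (setU Si) pre),
    (map (setU Si) post ++ flatten (map F l2)).
  rewrite -!catA; congr (_ ++ (_ ++ _)).
  by rewrite (eq_map (g := setU (Si :|: Z))) // => C /=; rewrite setUA.
Qed.

Lemma flat_sub (A : {set T}) (l : seq (mpq T)) C :
  C \in flatten (map (fun c => map (setU A) (cliques c)) l) -> A \subset C.
Proof.
elim: l => //= c' l IH.
by rewrite mem_cat => /orP [/mapP [D _ ->]|/IH //]; rewrite subsetUl.
Qed.

Lemma cliquesP_sub (A : {set T}) (cs : seq (mpq T)) C : C \in cliques (PNode A cs) -> A \subset C.
Proof.
case: cs => [|c cs]; first by rewrite /= inE => /eqP ->.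
rewrite cliquesP //; exact: flat_sub.
Qed.
End Tr.


Lemma sub_trans (T : finType) (t u w : mpq T) : List.In u (subtrees t) ->
  List.In w (subtrees u) -> List.In w (subtrees t).
Proof.
elim/mpq_ind': t => [A cs IH|ss IH].
- case=> [<- //|/In_flatten [s [/List.in_map_iff [c [<- hc]] hu]]] hw.
  exact: (sub_child A hc (IH c hc hu hw)).
- case=> [<- //|/In_flatten [s [/List.in_map_iff [[Si [c|]] [<- hc]] hu]]] hw //.
  exact: (sub_childQ hc (IH Si c hc hu hw)).
Qed.

Lemma self_in (T : finType) (c : mpq T) : List.In c (subtrees c).
Proof. by case: c => *; left. Qed.

Theorem mainTheorem2 (T : finType) (e : rel T) (t : mpq T)
  (S : {set T}) (cs : seq (mpq T)) (x y : T) :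
  symmetric e -> irreflexive e -> is_interval_graph e -> is_MPQ_tree e t ->
  List.In (PNode S cs) (subtrees t) -> cs <> [::] ->
  x \in S -> y \in S -> x != y ->
  ~ is_interval_graph (remove_edge e x y).
Proof.
move=> sym irr _ [_ [uq cl] _ [Qok _] hh] hu ne xS yS nxy.
have Qs : forall u, List.In u (subtrees t) -> Qsz u.
  move=> u hu' ss hs; have := Qok ss (sub_trans hu' hs); case; lia.
have sz : 2 <= size (cliques (PNode S cs)).
  case: cs ne hu hh => [//|c [|c2 l]] _ hu hh.
  - case: c hu hh => [S' cs'|ss] hu hh; first by case: (hh _ _ S' cs' hu).
    have hq : List.In (QNode ss) (subtrees t).
      apply: (sub_trans hu); exact: (@sub_child _ S [:: QNode ss] _ _ (or_introl erefl) (or_introl erefl)).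
    have := Qok ss hq; case=> h3 _ _ _ _.
    have := cliques_Q_size (Qs _ hq).
    rewrite /= cats0 size_map; lia.
  - have q1 : List.In c (subtrees t).
      apply: (sub_trans hu); exact: (@sub_child _ S (c :: c2 :: l) c c (or_introl erefl) (self_in c)).
    have q2 : List.In c2 (subtrees t).
      apply: (sub_trans hu); exact: (@sub_child _ S (c :: c2 :: l) c2 c2 (or_intror (or_introl erefl)) (self_in c2)).
    have := cliques_ne (Qs _ q1); have := cliques_ne (Qs _ q2).
    rewrite /= !size_cat !size_map; lia.
have [Z [pre [post E]]] := subtree_cliques hu.
have uq' : uniq (map (setU Z) (cliques (PNode S cs))).
  by move: uq; rewrite E !cat_uniq => /and3P [_ _ /andP [-> _]].
have inT : forall C, C \in map (setU Z) (cliques (PNode S cs)) -> C \in cliques t.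
  by move=> C hC; rewrite E !mem_cat hC orbT.
move: sz uq' inT (@cliquesP_sub _ S cs).
case: (cliques (PNode S cs)) => [|C1 [|C2 l]] //= _ /andP [n12 _] inT sub.
have s1 := sub C1; have s2 := sub C2.
rewrite !inE !eqxx /= orbT in s1 s2.
have m1 : is_maxclique e (Z :|: C1) by apply/cl/inT; rewrite inE eqxx.
have m2 : is_maxclique e (Z :|: C2) by apply/cl/inT; rewrite !inE eqxx orbT.
have n : Z :|: C1 != Z :|: C2 by apply: contraNneq n12 => ->; rewrite inE eqxx.
have sub1 : S \subset Z :|: C1 by apply: subset_trans (s1 erefl) (subsetUr _ _).
have sub2 : S \subset Z :|: C2 by apply: subset_trans (s2 erefl) (subsetUr _ _).
apply: (core sym irr m1 m2 n) => //; [apply: (subsetP sub1) | apply: (subsetP sub1) | apply: (subsetP sub2) | apply: (subsetP sub2)] => //.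
Qed.
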